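(* Let $k,i\ge0$, let $g_1,g_2\in\mathcal M(k)$ with $g_1^*g_1\neq g_2^*g_2$. Then the quadratic form on $V_i$ \[ h\longmapsto Q_{A,2}(hg_1)-Q_{A,2}(hg_2) \] has polar rank at least $\max\{0,\,i-k-m+1\}$.
   Context: $q$ is an odd prime power. Fix $m\ge0$ and $c_0,\dots,c_m\in\mathbb F_q$ with $c_m\ne0$, and let $A(z)=c_0+\tfrac12\sum_{\ell=1}^m c_\ell(z^\ell+z^{-\ell})\in\mathbb F_q[z,z^{-1}]$. For a polynomial $f$, $Q_{A,2}(f)=\operatorname{CT}\,A(z)f(z)f(z^{-1})$, where $\operatorname{CT}$ denotes the constant term of a Laurent polynomial; equivalently $Q_{A,2}(f)=\sum_{j=0}^m c_j\sum_{i\ge j}f_if_{i-j}$. $\mathcal M(k)$ is the set of monic polynomials of degree $k$ in $\mathbb F_q[t]$, $V_i$ the space of polynomials of degree $\le i$, and for $g$ of degree $k$, $g^*(t)=t^kg(t^{-1})$. The polar rank of a quadratic form $Q$ is the rank of $(x,y)\mapsto Q(x+y)-Q(x)-Q(y)$. *)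

(* Defs.v *)
From HB Require Import structures.
From mathcomp Require Import all_boot all_order all_algebra all_field.
Set Implicit Arguments. Unset Strict Implicit. Unset Printing Implicit Defensive.
Import GRing.Theory.
Local Open Scope ring_scope.

Definition QA2 (F : fieldType) (m : nat) (c : nat -> F) (f : {poly F}) : F :=
  \sum_(j < m.+1) c j * \sum_(j <= i < size f) f`_i * f`_(i - j).

(* g^*(t) = t^k g(t^{-1}) for g of degree k *)
Definition recip (F : fieldType) (k : nat) (g : {poly F}) : {poly F} :=
  \poly_(i < k.+1) g`_(k - i).

Definition monic_deg (F : fieldType) (k : nat) (g : {poly F}) : bool :=
  (g \is monic) && (size g == k.+1).

Definition polar (F : fieldType) (Q : {poly F} -> F) (x y : {poly F}) : F :=
  Q (x + y) - Q x - Q y.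

(* polar rank of Q restricted to V_i = polynomials of degree <= i:
   rank of the Gram matrix of the polar form in the basis 1, t, ..., t^i *)
Definition polar_rank_Vi (F : fieldType) (i : nat) (Q : {poly F} -> F) : nat :=
  \rank (\matrix_(a < i.+1, b < i.+1) polar Q 'X^a 'X^b).

(* Main.v *)
Require Import Defs.
From HB Require Import structures.
From mathcomp Require Import all_boot all_order all_algebra all_field.
From mathcomp Require Import zify ring.
Set Implicit Arguments. Unset Strict Implicit. Unset Printing Implicit Defensive.
Import GRing.Theory.
Local Open Scope ring_scope.

Section R.
Variable F : fieldType.
Implicit Types p q : {poly F}.

Lemma coef_recip n p j : (recip n p)`_j = if (j <= n)%N then p`_(n - j) else 0.
Proof. by rewrite /recip coef_poly ltnS. Qed.

Lemma size_recip n p : (size (recip n p) <= n.+1)%N.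
Proof. exact: size_poly. Qed.

Lemma recipD n p q : recip n (p + q) = recip n p + recip n q.
Proof. by apply/polyP=> j; rewrite coefD !coef_recip; case: ifP; rewrite ?coefD ?addr0. Qed.

Lemma recipB n p q : recip n (p - q) = recip n p - recip n q.
Proof. by apply/polyP=> j; rewrite coefB !coef_recip; case: ifP; rewrite ?coefB ?subr0. Qed.

Lemma recipZ n a p : recip n (a *: p) = a *: recip n p.
Proof. by apply/polyP=> j; rewrite coefZ !coef_recip; case: ifP; rewrite ?coefZ ?mulr0. Qed.

Lemma recip0 n : recip n (0 : {poly F}) = 0.
Proof. by apply/polyP=> j; rewrite coef_recip coef0; case: ifP => _; rewrite ?coef0. Qed.

Lemma recip_sum n (I : Type) (r : seq I) (P : pred I) (G : I -> {poly F}) :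
  recip n (\sum_(x <- r | P x) G x) = \sum_(x <- r | P x) recip n (G x).
Proof. exact: (big_morph (@recip F n) (@recipD n) (@recip0 n)). Qed.

Lemma recipXn n j : (j <= n)%N -> recip n ('X^j : {poly F}) = 'X^(n - j).
Proof.
move=> hj; apply/polyP=> l; rewrite coef_recip !coefXn.
case: (leqP l n) => hl.
  by have -> : (n - l == j)%N = (l == n - j)%N by apply/eqP/eqP; lia.
by have -> : (l == n - j)%N = false by apply/negbTE/eqP; lia.
Qed.

Lemma recipK n p : (size p <= n.+1)%N -> recip n (recip n p) = p.
Proof.
move=> hs; apply/polyP=> l; rewrite !coef_recip.
case: (leqP l n) => hl; first by rewrite leq_subr subKn.
by rewrite nth_default // (leq_trans hs).
Qed.

Lemma poly_expand n p : (size p <= n)%N -> p = \sum_(j < n) p`_j *: 'X^j.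
Proof.
move=> hs; rewrite -poly_def; apply/polyP=> l; rewrite coef_poly.
by case: ifP => // /negbT; rewrite -leqNgt => h; rewrite nth_default // (leq_trans hs).
Qed.

Lemma recipM n1 n2 p q : (size p <= n1.+1)%N -> (size q <= n2.+1)%N ->
  recip (n1 + n2) (p * q) = recip n1 p * recip n2 q.
Proof.
move=> hp hq.
rewrite [p in LHS](poly_expand hp) [q in LHS](poly_expand hq).
rewrite [p in RHS](poly_expand hp) [q in RHS](poly_expand hq).
rewrite !recip_sum big_distrl /= big_distrl recip_sum /=.
apply: eq_bigr => j1 _; rewrite mulr_sumr big_distrr /= recip_sum.
apply: eq_bigr => j2 _.
rewrite -scalerAl -scalerAr scalerA -exprD recipZ recipXn; last first.
  have := ltn_ord j1; have := ltn_ord j2; lia.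
rewrite !recipZ !recipXn; try (rewrite -ltnS; exact: ltn_ord).
rewrite -scalerAl -scalerAr scalerA -exprD; congr (_ *: 'X^_).
have := ltn_ord j1; have := ltn_ord j2; lia.
have := ltn_ord j1; have := ltn_ord j2; lia.
Qed.
End R.

Section Main.
Variable F : fieldType.
Variables (m : nat) (c : nat -> F).
Implicit Types p q f g W : {poly F}.

Definition A2 : {poly F} := \sum_(l < m.+1) c l *: ('X^(m + l) + 'X^(m - l)).

Lemma Pcoef N f j : (size f <= N.+1)%N ->
  (f * recip N f)`_(N + j) = \sum_(j <= u < size f) f`_u * f`_(u - j).
Proof.
move=> hs.
have h1 : (size f <= (N + j).+1)%N by apply: (leq_trans hs); lia.
rewrite (big_nat_widen _ _ _ _ _ h1) big_mkcond /=.
rewrite coefM -(big_mkord xpredT (fun u => f`_u * (recip N f)`_(N + j - u))).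
rewrite (@big_cat_nat _ _ _ j) //=; last by lia.
rewrite big_nat_cond big1 ?add0r; last first.
  move=> u; rewrite ?andbT => /andP [_ hu]; rewrite coef_recip.
  have -> : (N + j - u <= N)%N = false by apply/negbTE; lia.
  by rewrite mulr0.
apply: eq_big_nat => u /andP [hju hu].
rewrite coef_recip.
have -> : (N + j - u <= N)%N by lia.
have -> : (N - (N + j - u) = u - j)%N by lia.
case: ifP => // /negbT; rewrite -leqNgt => hsu.
by rewrite nth_default // mul0r.
Qed.

Lemma Psym N f l : (size f <= N.+1)%N -> (l <= N)%N ->
  (f * recip N f)`_(N - l) = (f * recip N f)`_(N + l).
Proof.
move=> hs hl.
have hP : recip (N + N) (f * recip N f) = f * recip N f.
  by rewrite recipM // ?size_recip // recipK // mulrC.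
rewrite -[in LHS]hP coef_recip.
have -> : (N - l <= N + N)%N by lia.
congr (_`_ _); lia.
Qed.

Lemma QA2_coef N f : (size f <= N.+1)%N -> (m <= N)%N ->
  QA2 m c f *+ 2 = (A2 * (f * recip N f))`_(m + N).
Proof.
move=> hs hm.
rewrite /QA2 /A2 big_distrl coef_sum -sumrMnl.
apply: eq_bigr => l _.
have hl : (l <= m)%N by rewrite -ltnS.

rewrite /= -scalerAl coefZ mulrDl coefD !coefXnM.
have -> : (m + N < m + l)%N = false by apply/negbTE; lia.
have -> : (m + N < m - l)%N = false by apply/negbTE; lia.
have -> : (m + N - (m + l) = N - l)%N by lia.
have -> : (m + N - (m - l) = N + l)%N by lia.
rewrite Psym //; last by lia.
by rewrite Pcoef // -mulrnAr mulr2n.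
Qed.

Lemma recipXg N k b g : size g = k.+1 -> (b + k <= N)%N ->
  recip N ('X^b * g) = 'X^(N - b - k) * recip k g.
Proof.
move=> hg hb.
have -> : N = ((N - b - k) + (b + k))%N by lia.
rewrite -[X in recip _ X]mul1r recipM; last 2 first.
- by rewrite size_poly1.
- by rewrite (leq_trans (size_polyMleq _ _)) // size_polyXn hg; lia.
rewrite -(expr0 'X) recipXn // recipM ?size_polyXn ?hg // recipXn //.
by rewrite !subn0 subnn expr0 mul1r; congr ('X^_ * _); lia.
Qed.

Definition Phi N (u v : {poly F}) := (A2 * (u * recip N v))`_(m + N).

Lemma Phi_polar N (u v : {poly F}) :
  Phi N (u + v) (u + v) - Phi N u u - Phi N v v = Phi N u v + Phi N v u.
Proof.
rewrite /Phi recipD !mulrDl !mulrDr !coefD; ring.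
Qed.

Lemma Phi_X N k g a b : size g = k.+1 -> (b + k <= N)%N ->
  Phi N ('X^a * g) ('X^b * g) = ('X^(a + (N - b - k)) * (A2 * (g * recip k g)))`_(m + N).
Proof.
move=> hg hb; rewrite /Phi (recipXg hg hb).
suff -> : A2 * ('X^a * g * ('X^(N - b - k) * recip k g)) =
  'X^(a + (N - b - k)) * (A2 * (g * recip k g)) by [].
rewrite exprD; ring.
Qed.

Lemma entry (k i : nat) g1 g2 (a b : nat) :
  size g1 = k.+1 -> size g2 = k.+1 -> (a <= i)%N -> (b <= i)%N ->
  polar (fun h : {poly F} => QA2 m c (h * g1) - QA2 m c (h * g2)) 'X^a 'X^b *+ 2 =
  ('X^(a + ((i + k + m) - b - k)) * (A2 * (g1 * recip k g1 - g2 * recip k g2)))`_(m + (i + k + m))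
  + ('X^(b + ((i + k + m) - a - k)) * (A2 * (g1 * recip k g1 - g2 * recip k g2)))`_(m + (i + k + m)).
Proof.
move=> hg1 hg2 ha hb.
set N := (i + k + m)%N.
have hQ : forall (h : {poly F}) g, (size h <= i.+1)%N -> size g = k.+1 ->
    QA2 m c (h * g) *+ 2 = Phi N (h * g) (h * g).
  move=> h g hh hg; rewrite (@QA2_coef N) //; last by rewrite /N; lia.
  apply: (leq_trans (size_polyMleq _ _)); rewrite hg /N; lia.
have hXa : (size ('X^a : {poly F}) <= i.+1)%N by rewrite size_polyXn.
have hXb : (size ('X^b : {poly F}) <= i.+1)%N by rewrite size_polyXn.
have hXab : (size (('X^a + 'X^b)%R : {poly F}) <= i.+1)%N.
  by apply: (leq_trans (size_polyD _ _)); rewrite geq_max hXa hXb.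
rewrite /polar !mulrnBl !hQ // !mulrDl.
have P1 := Phi_polar N ('X^a * g1) ('X^b * g1).
have P2 := Phi_polar N ('X^a * g2) ('X^b * g2).
have hab : (b + k <= N)%N by rewrite /N; lia.
have hba : (a + k <= N)%N by rewrite /N; lia.
rewrite !mulrBr !coefB.
rewrite -(Phi_X a hg1 hab) -(Phi_X b hg1 hba) -(Phi_X a hg2 hab) -(Phi_X b hg2 hba).
move: P1 P2.
set U1 := Phi N (_ + _) _; set U2 := Phi N (_ + _) _.
move=> P1 P2.
have -> : U1 = (U1 - Phi N ('X^a * g1) ('X^a * g1) - Phi N ('X^b * g1) ('X^b * g1))
   + Phi N ('X^a * g1) ('X^a * g1) + Phi N ('X^b * g1) ('X^b * g1) by ring.
have -> : U2 = (U2 - Phi N ('X^a * g2) ('X^a * g2) - Phi N ('X^b * g2) ('X^b * g2))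
   + Phi N ('X^a * g2) ('X^a * g2) + Phi N ('X^b * g2) ('X^b * g2) by ring.
rewrite P1 P2; ring.
Qed.

Lemma size_A2 : (size A2 <= (m + m).+1)%N.
Proof.
apply/leq_sizeP => j hj; rewrite /A2 coef_sum big1 // => l _.
have hl : (l <= m)%N by rewrite -ltnS.
rewrite coefZ coefD !coefXn.
have -> : (j == m + l)%N = false by apply/negbTE/eqP; lia.
have -> : (j == m - l)%N = false by apply/negbTE/eqP; lia.
by rewrite addr0 mulr0.
Qed.

Lemma recip_A2 : recip (m + m) A2 = A2.
Proof.
rewrite /A2 recip_sum; apply: eq_bigr => l _.
have hl : (l <= m)%N by rewrite -ltnS.
rewrite recipZ recipD !recipXn; try lia.
have -> : (m + m - (m + l) = m - l)%N by lia.
have -> : (m + m - (m - l) = m + l)%N by lia.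
by rewrite addrC.
Qed.

Lemma A2_neq0 : c m != 0 -> (2%:R : F) != 0 -> A2 != 0.
Proof.
move=> hc h2; apply/eqP => h.
have := congr1 (fun p : {poly F} => p`_(m + m)) h.
rewrite coef0 /A2 coef_sum big_ord_recr /= big1; last first.
  move=> l _; have := ltn_ord l => hl.
  rewrite coefZ coefD !coefXn.
  have -> : (m + m == m + l)%N = false by apply/negbTE/eqP; lia.
  have -> : (m + m == m - l)%N = false by apply/negbTE/eqP; lia.
  by rewrite addr0 mulr0.
rewrite add0r coefZ coefD !coefXn eqxx.
case: (posnP m) => [hm0|hm].
  move: hc; rewrite hm0 /= => hc /eqP; rewrite mulf_eq0 (negbTE hc) /=.
  by rewrite -mulr2n (negbTE h2).
have -> : (m + m == m - m)%N = false by apply/negbTE/eqP; lia.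
by rewrite addr0 mulr1 => /eqP; rewrite (negbTE hc).
Qed.

Lemma size_G k g : size g = k.+1 -> (size (g * recip k g)%R <= (k + k).+1)%N.
Proof.
move=> hg; apply: (leq_trans (size_polyMleq _ _)).
have := size_recip k g; rewrite hg; lia.
Qed.

Lemma recip_G k g : size g = k.+1 -> recip (k + k) (g * recip k g) = g * recip k g.
Proof. by move=> hg; rewrite recipM ?hg ?size_recip // recipK ?hg // mulrC. Qed.

Lemma Esym (k i : nat) W (a b : nat) :
  (size W <= ((m + k) + (m + k)).+1)%N -> recip ((m + k) + (m + k)) W = W ->
  (a <= i)%N -> (b <= i)%N ->
  ('X^(a + ((i + k + m) - b - k)) * W)`_(m + (i + k + m)) =
  ('X^(b + ((i + k + m) - a - k)) * W)`_(m + (i + k + m)).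
Proof.
move=> hs hW ha hb; rewrite !coefXnM.
case: ifP => h1; case: ifP => h2 //.
- rewrite nth_default //; apply: (leq_trans hs); lia.
- rewrite nth_default //; apply: (leq_trans hs); lia.
- rewrite -[in LHS]hW coef_recip.
  have -> : (m + (i + k + m) - (a + (i + k + m - b - k)) <= m + k + (m + k))%N.
    move: h1 h2; rewrite !ltnNge => /negbFE h1 /negbFE h2; lia.
  congr (_`_ _); move: h1 h2; rewrite !ltnNge => /negbFE h1 /negbFE h2; lia.
Qed.
End Main.
Lemma rank_lb (F : fieldType) n d (Mx : 'M[F]_n) :
  (forall a b : 'I_n, (a + d < b)%N -> Mx a b = 0) ->
  (forall a b : 'I_n, (a + d)%N = b -> Mx a b != 0) ->
  (n - d <= \rank Mx)%N.
Proof.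
move=> h0 h1.
case: (leqP n d) => hnd; first by have -> : (n - d = 0)%N by lia.
set r := (n - d)%N.
have hf : forall x : 'I_r, (x < n)%N by move=> x; have := ltn_ord x; rewrite /r; lia.
have hg : forall x : 'I_r, (x + d < n)%N by move=> x; have := ltn_ord x; rewrite /r; lia.
pose f (x : 'I_r) : 'I_n := Ordinal (hf x).
pose g (x : 'I_r) : 'I_n := Ordinal (hg x).
set S := rowsub f (colsub g Mx).
have hS : \rank S = r.
  apply: mxrank_unit; rewrite unitmxE unitfE det_trig; last first.
    apply/is_trig_mxP => x y hxy; rewrite /S !mxE; apply: h0 => /=; lia.
  apply/prodf_neq0 => x _; rewrite /S !mxE; apply: h1 => /=; lia.
rewrite -hS /S rowsubE.
apply: leq_trans (mxrankM_maxr _ _) _.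
have -> : colsub g Mx = Mx *m colsub g 1%:M by rewrite mulmx_colsub mulmx1.
exact: mxrankM_maxl.
Qed.
Lemma two_neq0 (F : finFieldType) (hodd : odd #|F|) : (2%:R : F) != 0.
Proof.
apply/negP => h2.
have pc : (2%N \in [pchar F]) by rewrite inE /= h2.
have := card_pprimeChar pc.
set n := logn _ _ => hc.
have : odd #|F| by [].
have -> : #|F| = (2 ^ n)%N by exact: hc.
case: n hc => [|n] hc; last by rewrite expnS oddM.
rewrite expn0 => _.
have := finNzRing_gt1 F. by rewrite hc.
Qed.

Unset Implicit Arguments.
Set Strict Implicit.

Theorem lemma4p1 (F : finFieldType) (hodd : odd #|F|)
  (m : nat) (c : nat -> F) (hcm : c m != 0)
  (k i : nat) (g1 g2 : {poly F})
  (hg1 : monic_deg k g1) (hg2 : monic_deg k g2)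
  (hne : recip k g1 * g1 != recip k g2 * g2) :
  (i.+1 - (k + m) <= polar_rank_Vi i (fun h => (QA2 m c (h * g1) - QA2 m c (h * g2))%R))%N.
Proof.
move: hg1 hg2 => /andP [_ /eqP s1] /andP [_ /eqP s2].
have two : (2%:R : F) != 0 := two_neq0 hodd.
set D := g1 * recip k g1 - g2 * recip k g2.
set W := A2 m c * D.
have sD : (size D <= (k + k).+1)%N.
  apply: (leq_trans (size_polyD _ _)); rewrite size_polyN geq_max.
  by rewrite !size_G.
have rD : recip (k + k) D = D by rewrite /D recipB !recip_G.
have D0 : D != 0.
  by rewrite /D subr_eq0 mulrC [g2 * _]mulrC.
have sW : (size W <= ((m + k) + (m + k)).+1)%N.
  apply: (leq_trans (size_polyMleq _ _)).
  move: sD (size_A2 m c); set y := size D; set x := size (A2 m c). lia.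
have rW : recip ((m + k) + (m + k)) W = W.
  have -> : ((m + k) + (m + k) = (m + m) + (k + k))%N by lia.
  by rewrite /W recipM ?size_A2 // recip_A2 rD.
have W0 : W != 0 by rewrite /W mulf_neq0 // A2_neq0.
set t := (size W).-1.
have hst : size W = t.+1.
  by rewrite /t prednK // lt0n size_poly_eq0.
have Wt : W`_t != 0 by rewrite -lead_coefE lead_coef_eq0.
have htK : (m + k <= t)%N.
  have : W`_((m + k) + (m + k) - t) != 0.
    rewrite -rW coef_recip.
    have -> : ((m + k) + (m + k) - t <= (m + k) + (m + k))%N by lia.
    have -> : ((m + k) + (m + k) - ((m + k) + (m + k) - t) = t)%N.
      have : (t < ((m + k) + (m + k)).+1)%N by rewrite -hst.
      lia.
    exact: Wt.
  apply: contraNT; rewrite -ltnNge => h.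
  by apply/eqP/nth_default; rewrite hst; lia.
set d := (t - (m + k))%N.
apply: (@leq_trans (i.+1 - d)).
  have : (t < ((m + k) + (m + k)).+1)%N by rewrite -hst.
  rewrite /d; lia.
rewrite /polar_rank_Vi.
set Q := (fun h : {poly F} => (QA2 m c (h * g1) - QA2 m c (h * g2))%R).
have hE : forall a b : nat, (a <= i)%N -> (b <= i)%N ->
    polar Q 'X^a 'X^b = ('X^(a + ((i + k + m) - b - k)) * W)`_(m + (i + k + m)).
  move=> a b ha hb.
  apply: (mulIf two); rewrite !mulr_natr.
  rewrite /Q (entry m c s1 s2 ha hb) -/D -/W (Esym sW rW hb ha) mulr2n //.
apply: rank_lb => a b hab; rewrite mxE hE; try (rewrite -ltnS; exact: ltn_ord).
- rewrite coefXnM.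
  have hb := ltn_ord b; have ha := ltn_ord a.
  case: ifP => // _; apply: nth_default; rewrite hst /d in hab *; lia.
- rewrite coefXnM.
  have hb := ltn_ord b; have ha := ltn_ord a.
  have -> : (m + (i + k + m) < a + (i + k + m - b - k))%N = false.
    apply/negbTE; rewrite /d in hab; lia.
  have -> : (m + (i + k + m) - (a + (i + k + m - b - k)) = t)%N.
    rewrite /d in hab; lia.
  exact: Wt.
Qed.
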